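(* For every fixed $\mathcal R>0$, the diversity order $$d=-\lim_{\gamma_T\to\infty}\frac{\log P_{out}^{IR}(M)}{\log\gamma_T}$$ exists and equals $M$; equivalently $P_{out}^{IR}(M)=c(\gamma_T)\gamma_T^{-M}$ with $\lim_{\gamma_T\to\infty}\log c(\gamma_T)/\log\gamma_T=0$.
   Context: Fix $M\ge 1$, $\sigma_1,\dots,\sigma_M>0$ and real $\lambda_1,\dots,\lambda_M$ with $|\lambda_k|<1$ (so that the pairwise power correlation coefficients $\rho_{k,l}=\lambda_k^2\lambda_l^2$ are $<1$). Let ${}_0F_1(;1;z)=\sum_{n\ge0} z^n/(n!)^2$. The random vector $(|h_1|,\dots,|h_M|)$ has joint PDF on $[0,\infty)^M$ $$f(x_1,\dots,x_M)=\prod_{k=1}^M\frac{1}{\sigma_k^2(1-\lambda_k^2)}\int_0^\infty e^{-\left(1+\sum_{k=1}^M\frac{\lambda_k^2}{1-\lambda_k^2}\right)t}\prod_{k=1}^M x_k\,e^{-\frac{x_k^2}{2\sigma_k^2(1-\lambda_k^2)}}\,{}_0F_1\!\left(;1;\frac{x_k^2\lambda_k^2 t}{2\sigma_k^2(1-\lambda_k^2)^2}\right)dt .$$ For a transmit SNR $\gamma_T>0$ set $\gamma_l=\gamma_T|h_l|^2$ and define the outage probability $P_{out}^{IR}(M)=\Pr\big(\sum_{l=1}^M\log_2(1+\gamma_l)<\mathcal R\big)$ (a function of $\gamma_T$). *)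

(* Defs.v *)
From HB Require Import structures.
From mathcomp Require Import all_boot all_order all_algebra.
From mathcomp Require Import all_classical all_reals all_analysis.
Set Implicit Arguments. Unset Strict Implicit. Unset Printing Implicit Defensive.
Import Order.TTheory GRing.Theory Num.Theory.
Import numFieldNormedType.Exports.
Local Open Scope classical_set_scope.
Local Open Scope ring_scope.

Section Defs.
Variable R : realType.

Definition hyp0F1 (z : R) : R :=
  limn (fun N : nat => \sum_(0 <= n < N) (z ^+ n / ((n`!)%:R ^+ 2))).

Definition vcons n (x : R) (y : 'I_n -> R) : 'I_n.+1 -> R :=
  fun i => match unlift ord0 i with None => x | Some j => y j end.

Fixpoint iint_pos (n : nat) : (('I_n -> R) -> \bar R) -> \bar R :=
  match n with
  | 0 => fun F => F (fun i => 0)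
  | n'.+1 => fun F =>
      (\int[@lebesgue_measure R]_(x in `[0%R, +oo[%classic)
          iint_pos (fun y => F (vcons x y)))%E
  end.

(* joint PDF of (|h_1|,...,|h_M|) *)
Definition jpdf (M : nat) (sigma lambda : 'I_M -> R) (x : 'I_M -> R) : \bar R :=
  ((\prod_(k < M) (sigma k ^+ 2 * (1 - lambda k ^+ 2))^-1)%:E *
   \int[@lebesgue_measure R]_(t in `[0%R, +oo[%classic)
     (expR (- ((1 + \sum_(k < M) lambda k ^+ 2 / (1 - lambda k ^+ 2)) * t)) *
      \prod_(k < M)
        (x k * expR (- (x k ^+ 2 / (2 * sigma k ^+ 2 * (1 - lambda k ^+ 2)))) *
         hyp0F1 (x k ^+ 2 * lambda k ^+ 2 * t /
                 (2 * sigma k ^+ 2 * (1 - lambda k ^+ 2) ^+ 2))))%:E)%E.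

Definition log2 (y : R) : R := ln y / ln 2.

(* P_out^IR(M) = Pr( sum_l log2(1 + gammaT |h_l|^2) < Rate ) *)
Definition Pout (M : nat) (sigma lambda : 'I_M -> R) (Rate gammaT : R) : \bar R :=
  iint_pos (fun x : 'I_M -> R =>
    if \sum_(l < M) log2 (1 + gammaT * x l ^+ 2) < Rate
    then jpdf sigma lambda x else 0%E).

End Defs.

(* Main.v *)
Require Import Defs.
From HB Require Import structures.
From mathcomp Require Import all_boot all_order all_algebra.
From mathcomp Require Import all_classical all_reals all_analysis.
From mathcomp Require Import ring lra.
Import Order.TTheory GRing.Theory Num.Theory.
Import numFieldNormedType.Exports.
Local Open Scope classical_set_scope.
Local Open Scope ring_scope.
Section S.
Variable R : realType.
Local Notation mu := (@lebesgue_measure R).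

Lemma le_int_nm (D : set R) (f g : R -> \bar R) :
  (forall x, D x -> (0 <= f x)%E) -> (forall x, D x -> (f x <= g x)%E) ->
  (\int[mu]_(x in D) f x <= \int[mu]_(x in D) g x)%E.
Proof.
move=> f0 fg.
have g0 : forall x, D x -> (0 <= g x)%E by move=> x Dx; exact: le_trans (f0 _ Dx) (fg _ Dx).
rewrite (ge0_integralE mu f0) (ge0_integralE mu g0).
apply: ereal_sup_le => _ [h hf <-]; exists h => //= x.
apply: le_trans (hf x) _; rewrite /patch; case: ifP => // /set_mem Dx; exact: fg.
Qed.

Lemma vcons0 n (x : R) (y : 'I_n -> R) : vcons x y ord0 = x.
Proof. by rewrite /vcons unlift_none. Qed.

Lemma vconsS n (x : R) (y : 'I_n -> R) i : vcons x y (lift ord0 i) = y i.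
Proof. by rewrite /vcons liftK. Qed.

Lemma vcons_ge0 n (x : R) (y : 'I_n -> R) : 0 <= x -> (forall i, 0 <= y i) ->
  forall i, 0 <= vcons x y i.
Proof. by move=> x0 y0 i; rewrite /vcons; case: unlift. Qed.

Lemma iint_pos_ge0 n (F : ('I_n -> R) -> \bar R) :
  (forall x, (forall i, 0 <= x i) -> (0 <= F x)%E) -> (0 <= iint_pos F)%E.
Proof.
elim: n F => [|n IH] F F0 /=; first by apply: F0.
apply: integral_ge0 => x /= x0; apply: IH => y y0; apply: F0.
apply: vcons_ge0 => //; move: x0 => /=; by rewrite in_itv /= andbT.
Qed.

Lemma iint_pos_le n (F G : ('I_n -> R) -> \bar R) :
  (forall x, (forall i, 0 <= x i) -> (0 <= F x)%E) ->
  (forall x, (forall i, 0 <= x i) -> (F x <= G x)%E) -> (iint_pos F <= iint_pos G)%E.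
Proof.
elim: n F G => [|n IH] F G F0 FG /=; first by apply: FG.
have x0P : forall x : R, (`[0%R, +oo[%classic : set R) x -> 0 <= x.
  by move=> x /=; rewrite in_itv /= andbT.
apply: le_int_nm => x /x0P x0.
  by apply: iint_pos_ge0 => y y0; apply: F0; apply: vcons_ge0.
by apply: IH => y y0; [apply: F0|apply: FG]; apply: vcons_ge0.
Qed.

Lemma int_indic (beta u v : R) : 0 <= beta -> 0 <= u <= v ->
  (\int[mu]_(x in `[0%R, +oo[%classic) (beta * \1_(`[u, v]%classic) x)%:E
    = (beta * (v - u))%:E)%E.
Proof.
move=> b0 /andP[u0 uv].
under eq_integral do rewrite EFinM.
rewrite ge0_integralZl_EFin //; last first.
  by apply/measurable_realfun.measurable_EFinP; apply: measurable_realfun.measurable_indic.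
rewrite integral_indic //.
rewrite (_ : _ `&` _ = `[u, v]%classic); last first.
  apply/seteqP; split=> x /=; first by case.
  move=> h; split => //; move: h; rewrite !in_itv /= => /andP[ux _].
  by rewrite (le_trans u0 ux).
have H := lebesgue_measure_itv `[u, v].
transitivity (beta%:E * (if (u%:E < v%:E)%E then (v%:E - u%:E)%E else 0%E))%E.
  by congr (_ * _)%E; exact: H.
rewrite lte_fin; case: ltP => [_|vu]; first by rewrite -EFinB -EFinM.
have -> : v = u by apply/eqP; rewrite eq_le vu uv.
by rewrite subrr mulr0 mule0.
Qed.

Lemma iint_prod n (beta u v : R) : 0 <= beta -> 0 <= u <= v -> forall k, 0 <= k ->
  iint_pos (fun y : 'I_n -> R =>
     (k * \prod_(i < n) (beta * \1_(`[u, v]%classic : set R) (y i)))%:E)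
  = (k * (beta * (v - u)) ^+ n)%:E.
Proof.
move=> b0 uv; elim: n => [|n IH] k k0 /=.
  by rewrite big_ord0 expr0.
have E : forall x, iint_pos (fun y : 'I_n -> R =>
     (k * \prod_(i < n.+1) (beta * \1_(`[u, v]%classic : set R) (vcons x y i)))%:E)
   = ((k * (beta * (v - u)) ^+ n) * (beta * \1_(`[u, v]%classic : set R) x))%:E.
  move=> x.
  have kx0 : 0 <= k * (beta * \1_(`[u, v]%classic : set R) x).
    by rewrite mulr_ge0 // mulr_ge0 // indic_ge0.
  rewrite -[in RHS]mulrA [X in (k * X)%R]mulrC mulrA -(IH _ kx0).
  congr iint_pos; apply: funext => y; congr EFin.
  by rewrite big_ord_recl vcons0 mulrA; congr (_ * _); apply: eq_bigr => i _; rewrite vconsS.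
under eq_integral => x _ do rewrite E.
under eq_integral do rewrite EFinM.
rewrite ge0_integralZl_EFin //.
- by rewrite int_indic // -EFinM exprSr !mulrA.
- by move=> x _; rewrite lee_fin mulr_ge0 // indic_ge0.
- by apply/measurable_realfun.measurable_EFinP; apply: (measurable_realfun.measurable_funM (f := cst beta)) => //;
    apply: measurable_realfun.measurable_indic.
- by rewrite mulr_ge0 // exprn_ge0 // mulr_ge0 // subr_ge0; case/andP: uv.
Qed.

Lemma hyp0F1_bounds (z : R) : 0 <= z -> 1 <= hyp0F1 z <= expR z.
Proof.
move=> z0.
pose s := (fun N : nat => \sum_(0 <= n < N) (z ^+ n / ((n`!)%:R ^+ 2))).
have term0 : forall n : nat, 0 <= z ^+ n / ((n`!)%:R ^+ 2) :> R.
  by move=> n; rewrite divr_ge0 // ?exprn_ge0.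
have nd : nondecreasing_seq s.
  by move=> m n mn; apply: (nondecreasing_series (fun n _ _ => term0 n)).
have le_exp : forall N, s N <= expR z.
  move=> N; apply: (@le_trans _ _ (series (exp_coeff z) N)).
    rewrite /series /s /=; apply: ler_sum => n _; rewrite /exp_coeff /=.
    have f1 : 1 <= (n`!)%:R :> R by rewrite ler1n fact_gt0.
    rewrite expr2 invfM mulrA ler_pdivrMr ?(lt_le_trans ltr01) //.
    rewrite ler_peMr // divr_ge0 ?exprn_ge0 //.
  rewrite /expR; apply: nondecreasing_cvgn_le; last exact: is_cvg_series_exp_coeff.
  move=> m n mn; apply: (nondecreasing_series (P := xpredT)) => // k _ _.
  by rewrite /exp_coeff /= divr_ge0 ?exprn_ge0.
have cs : cvgn s.
  apply: nondecreasing_is_cvgn => //; exists (expR z) => _ [N _ <-]; exact: le_exp.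
apply/andP; split.
  have -> : 1 = s 1%N by rewrite /s big_nat1 expr0 fact0 expr1n divr1.
  exact: nondecreasing_cvgn_le.
rewrite /hyp0F1 -/s; apply: limr_le => //; near=> N; exact: le_exp.
Unshelve. all: by end_near.
Qed.

Lemma prod_cst n (c : R) : \prod_(k < n) c = c ^+ n.
Proof. by elim: n => [|n IH]; rewrite ?big_ord0 ?expr0 // big_ord_recr IH exprSr. Qed.

Section jp.
Variables (M : nat) (sigma lambda : 'I_M -> R).
Hypothesis sig0 : forall k, 0 < sigma k.
Hypothesis lam1 : forall k, `|lambda k| < 1.

Let l1 k : 0 < 1 - lambda k ^+ 2.
Proof.
have h := lam1 k; have h0 := normr_ge0 (lambda k).
rewrite -real_normK ?num_real //; nra.
Qed.

Definition PP := \prod_(k < M) (sigma k ^+ 2 * (1 - lambda k ^+ 2))^-1.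
Definition SS := \sum_(k < M) lambda k ^+ 2 / (1 - lambda k ^+ 2).
Definition qq k (y : R) := y ^+ 2 / (2 * sigma k ^+ 2 * (1 - lambda k ^+ 2)).

Lemma PP_gt0 : 0 < PP.
Proof. by apply: prodr_gt0 => k _; rewrite invr_gt0 mulr_gt0 ?exprn_gt0. Qed.

Lemma SS_ge0 : 0 <= SS.
Proof. by apply: sumr_ge0 => k _; rewrite divr_ge0 ?exprn_even_ge0 // ltW. Qed.

Lemma arg_eq k (y t : R) :
  y ^+ 2 * lambda k ^+ 2 * t / (2 * sigma k ^+ 2 * (1 - lambda k ^+ 2) ^+ 2) =
  qq k y * (lambda k ^+ 2 / (1 - lambda k ^+ 2) * t).
Proof.
rewrite /qq; have s0 : sigma k != 0 by rewrite gt_eqF.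
have l0 : 1 - lambda k ^+ 2 != 0 by rewrite gt_eqF.
field; by rewrite s0 l0.
Qed.

Lemma qq_ge0 k y : 0 <= qq k y.
Proof. by rewrite /qq divr_ge0 ?exprn_even_ge0 // mulr_ge0 ?mulr_ge0 ?exprn_even_ge0 // ltW. Qed.

Definition integrand (x : 'I_M -> R) (t : R) :=
  expR (- ((1 + \sum_(k < M) lambda k ^+ 2 / (1 - lambda k ^+ 2)) * t)) *
      \prod_(k < M)
        (x k * expR (- (x k ^+ 2 / (2 * sigma k ^+ 2 * (1 - lambda k ^+ 2)))) *
         hyp0F1 (x k ^+ 2 * lambda k ^+ 2 * t /
                 (2 * sigma k ^+ 2 * (1 - lambda k ^+ 2) ^+ 2))).

Lemma jpdfE x : jpdf sigma lambda x =
  (PP%:E * \int[mu]_(t in `[0%R, +oo[%classic) (integrand x t)%:E)%E.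
Proof. by []. Qed.

Lemma factor_ge0 x k t : 0 <= x k -> 0 <= t ->
  0 <= x k * expR (- (x k ^+ 2 / (2 * sigma k ^+ 2 * (1 - lambda k ^+ 2)))) *
         hyp0F1 (x k ^+ 2 * lambda k ^+ 2 * t /
                 (2 * sigma k ^+ 2 * (1 - lambda k ^+ 2) ^+ 2)).
Proof.
move=> x0 t0; rewrite mulr_ge0 ?mulr_ge0 ?expR_ge0 //.
have a0 : 0 <= qq k (x k) * (lambda k ^+ 2 / (1 - lambda k ^+ 2) * t).
  by rewrite mulr_ge0 ?qq_ge0 // mulr_ge0 // divr_ge0 ?exprn_even_ge0 // ltW.
have := hyp0F1_bounds _ a0; rewrite -arg_eq => /andP[h _].
exact: le_trans ler01 h.
Qed.

Lemma integrand_ge0 x t : (forall k, 0 <= x k) -> 0 <= t -> 0 <= integrand x t.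
Proof.
move=> x0 t0; rewrite /integrand mulr_ge0 ?expR_ge0 //.
by apply: prodr_ge0 => k _; apply: factor_ge0.
Qed.

Lemma jpdf_ge0 x : (forall k, 0 <= x k) -> (0 <= jpdf sigma lambda x)%E.
Proof.
move=> x0; rewrite jpdfE mule_ge0 // ?lee_fin ?(ltW PP_gt0) //.
apply: integral_ge0 => t /=; rewrite in_itv /= andbT => t0.
by rewrite lee_fin integrand_ge0.
Qed.

Lemma jpdf_upper x : (forall k, 0 <= x k) -> (forall k, qq k (x k) <= 1) ->
  (jpdf sigma lambda x <= (PP * \prod_(k < M) x k)%:E)%E.
Proof.
move=> x0 q1; rewrite jpdfE EFinM; apply: lee_wpmul2l; first by rewrite lee_fin ltW ?PP_gt0.
have px0 : 0 <= \prod_(k < M) x k by apply: prodr_ge0.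
apply: (@le_trans _ _ (\int[mu]_(t in `[0%R, +oo[%classic)
            ((\prod_(k < M) x k) * exponential_pdf 1 t)%:E)%E).
  apply: le_int_nm => t /=; rewrite in_itv /= andbT => t0.
    by rewrite lee_fin integrand_ge0.
  rewrite lee_fin exponential_pdfE // mul1r mulN1r.
  rewrite /integrand.
  apply: (@le_trans _ _ (expR (- ((1 + SS) * t)) *
      \prod_(k < M) (x k * expR (lambda k ^+ 2 / (1 - lambda k ^+ 2) * t)))).
    rewrite -/SS; apply: ler_wpM2l; first exact: expR_ge0.
    apply: ler_prod => k _; apply/andP; split; first exact: factor_ge0.
    rewrite -mulrA; apply: ler_wpM2l => //.
    have a0 : 0 <= lambda k ^+ 2 / (1 - lambda k ^+ 2) * t.
      by rewrite mulr_ge0 // divr_ge0 ?exprn_even_ge0 // ltW.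
    have [h1 h2] := andP (hyp0F1_bounds _ (mulr_ge0 (qq_ge0 k (x k)) a0)).
    rewrite -[X in _ <= X]mul1r arg_eq; apply: ler_pM; first exact: expR_ge0.
    - exact: le_trans ler01 h1.
    - by rewrite expR_le1 oppr_le0 qq_ge0.
    - apply: le_trans h2 _; rewrite ler_expR; exact: ler_piMl.
  rewrite big_split /= -expR_sum -mulr_suml -/SS mulrCA -expRD.
  by rewrite mulrDl mul1r opprD addrNK.
under eq_integral do rewrite EFinM.
rewrite ge0_integralZl_EFin //; last 2 first.
- by move=> t _; rewrite lee_fin exponential_pdf_ge0.
- by apply/measurable_realfun.measurable_EFinP; apply: measurable_funTS; exact: measurable_exponential_pdf.
rewrite -[X in (_ <= X)%E]mule1; apply: lee_wpmul2l; first by rewrite lee_fin.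
rewrite -(integral_exponential_pdf (ltr01 : (0 : R) < 1)).
apply: ge0_subset_integral => //.
- by apply/measurable_realfun.measurable_EFinP; exact: measurable_exponential_pdf.
- by move=> t _; rewrite lee_fin exponential_pdf_ge0.
Qed.

Lemma jpdf_lower x : (forall k, 0 <= x k) -> (forall k, qq k (x k) <= 1) ->
  ((PP * (expR (- (1 + SS)) * expR (-1) ^+ M * \prod_(k < M) x k))%:E
     <= jpdf sigma lambda x)%E.
Proof.
move=> x0 q1; rewrite jpdfE EFinM; apply: lee_wpmul2l; first by rewrite lee_fin ltW ?PP_gt0.
have px0 : 0 <= \prod_(k < M) x k by apply: prodr_ge0.
set c := expR (- (1 + SS)) * expR (-1) ^+ M * \prod_(k < M) x k.
have c0 : 0 <= c by rewrite /c !mulr_ge0 ?exprn_ge0 ?expR_ge0.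
have -> : c%:E = (\int[mu]_(t in `[0%R, +oo[%classic)
            (c * \1_(`[0, 1]%classic : set R) t)%:E)%E.
  rewrite int_indic // ?ler01 //; f_equal; lra.
apply: le_int_nm => t /=; rewrite in_itv /= andbT => t0.
  by rewrite lee_fin mulr_ge0 // indic_ge0.
rewrite lee_fin indicE; case: (boolP (t \in _)) => [|_]; last first.
  by rewrite mulr0 integrand_ge0.
rewrite inE /= in_itv /= => /andP[_ t1].
rewrite mulr1 /c /integrand -/SS -mulrA; apply: ler_pM.
- by rewrite expR_ge0.
- by rewrite mulr_ge0 ?exprn_ge0 ?expR_ge0.
- rewrite ler_expR lerN2; exact: ler_piMr (addr_ge0 ler01 SS_ge0) t1.
have E1 : \prod_(k < M) expR (-1) = expR (-1) ^+ M := prod_cst M (expR (-1)).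
rewrite -E1.
rewrite mulrC -big_split /=.
apply: ler_prod => k _; apply/andP; split.
  by rewrite mulr_ge0 ?expR_ge0.
have a0 : 0 <= lambda k ^+ 2 / (1 - lambda k ^+ 2) * t.
  by rewrite mulr_ge0 // divr_ge0 ?exprn_even_ge0 // ltW.
have [h1 h2] := andP (hyp0F1_bounds _ (mulr_ge0 (qq_ge0 k (x k)) a0)).
rewrite -mulrA arg_eq; apply: ler_wpM2l => //.
rewrite -[X in X <= _]mulr1; apply: ler_pM => //.
by rewrite ler_expR lerN2; exact: q1.
Qed.
End jp.
Lemma ln_cvgy : (@ln R) x @[x --> +oo] --> +oo.
Proof.
apply/cvgryPge => A; near=> x.
have x0 : 0 < x by near: x; exact: nbhs_pinfty_gt (num_real _).
rewrite -(expRK A) ler_ln; [|by rewrite posrE expR_gt0|by rewrite posrE].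
near: x; exact: nbhs_pinfty_ge (num_real _).
Unshelve. all: by end_near.
Qed.

Lemma lnV_cvg0 : (fun x : R => (ln x)^-1) x @[x --> +oo] --> 0.
Proof.
apply/(@gtr0_cvgV0 _ _ _ _ (@ln R)); last exact: ln_cvgy.
near=> x; apply: ln_gt0; near: x; exact: nbhs_pinfty_gt (num_real _).
Unshelve. all: by end_near.
Qed.

Lemma ln_div_lim (f : R -> R) (A1 A2 m : R) :
  (\forall g \near +oo, A1 - m * ln g <= f g <= A2 - m * ln g) ->
  (fun g => f g / ln g) @ +oo --> - m.
Proof.
move=> H.
have cA : forall A : R, (fun g => A * (ln g)^-1 - m) @ +oo --> - m.
  move=> A; rewrite -[X in _ --> X]add0r -(mulr0 A).
  apply: cvgB; last exact: cvg_cst.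
  exact: cvgMl_tmp lnV_cvg0.
apply: (squeeze_cvgr _ (cA A1) (cA A2)).
near=> g.
have lg : 0 < ln g by apply: ln_gt0; near: g; exact: nbhs_pinfty_gt (num_real _).
have E : forall A, A * (ln g)^-1 - m = (A - m * ln g) / ln g.
  by move=> A; field; rewrite gt_eqF.
rewrite !E !ler_pM2r ?invr_gt0 //.
by near: g; apply: filterS H.
Unshelve. all: by end_near.
Qed.


Lemma sum_cst n (c : R) : \sum_(k < n) c = c * n%:R.
Proof. by elim: n => [|n IH]; rewrite ?big_ord0 ?mulr0 // big_ord_recr IH mulrSr mulrDr mulr1. Qed.

Section Pb.
Variables (M : nat) (sigma lambda : 'I_M -> R) (Rate : R).
Hypothesis M1 : (1 <= M)%N.
Hypothesis sig0 : forall k, 0 < sigma k.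
Hypothesis lam1 : forall k, `|lambda k| < 1.
Hypothesis Rate0 : 0 < Rate.

Let l1 k : 0 < 1 - lambda k ^+ 2.
Proof.
have h := lam1 k; have h0 := normr_ge0 (lambda k).
rewrite -real_normK ?num_real //; nra.
Qed.

Let DD k := 2 * sigma k ^+ 2 * (1 - lambda k ^+ 2).
Let DD_gt0 k : 0 < DD k.
Proof. by rewrite /DD !mulr_gt0 ?exprn_gt0. Qed.
Definition cc := (1 + \sum_(k < M) (DD k)^-1)^-1.
Let sD_ge0 : 0 <= \sum_(k < M) (DD k)^-1.
Proof. by apply: sumr_ge0 => k _; rewrite invr_ge0 ltW. Qed.
Lemma cc_gt0 : 0 < cc.
Proof. by rewrite /cc invr_gt0 ltr_wpDr. Qed.

Lemma qq_le1 k y : y ^+ 2 <= cc -> qq M sigma lambda k y <= 1.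
Proof.
move=> ycc; rewrite /qq -/(DD k) ler_pdivrMr //.
apply: le_trans ycc _; rewrite mul1r /cc -[X in _ <= X](invrK (DD k)).
rewrite lef_pV2 ?posrE ?invr_gt0 ?ltr_wpDr //.
rewrite (bigD1 k) //=.
have : 0 <= \sum_(i < M | i != k) (DD i)^-1.
  by apply: sumr_ge0 => i _; rewrite invr_ge0 ltW.
lra.
Qed.

Let ln2 : 0 < ln (2 : R).
Proof. by apply: ln_gt0; rewrite ltr1n. Qed.

Definition aa := expR (Rate * ln 2) - 1.
Definition ee := Rate * ln 2 / (2 * M%:R).

Lemma aa_gt0 : 0 < aa.
Proof. by rewrite /aa subr_gt0 expR_gt1 mulr_gt0. Qed.

Lemma ee_gt0 : 0 < ee.
Proof. by rewrite /ee divr_gt0 ?mulr_gt0 // ltr0n. Qed.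

Lemma log2_ge0 (u : R) : 0 <= u -> 0 <= log2 (1 + u).
Proof. by move=> u0; rewrite /log2 divr_ge0 ?ln_ge0 ?lerDl // ltW. Qed.

Lemma cond_upper g (x : 'I_M -> R) : 0 < g ->
  \sum_(l < M) log2 (1 + g * x l ^+ 2) < Rate -> forall k, x k ^+ 2 <= aa / g.
Proof.
move=> g0 hs k.
have t0 : forall l, 0 <= log2 (1 + g * x l ^+ 2).
  by move=> l; apply: log2_ge0; rewrite mulr_ge0 ?exprn_even_ge0 // ltW.
have hk : log2 (1 + g * x k ^+ 2) < Rate.
  apply: le_lt_trans hs; rewrite (bigD1 k) //= lerDl.
  by apply: sumr_ge0 => i _.
move: hk; rewrite /log2 ltr_pdivrMr // => hk.
have p0 : 0 < 1 + g * x k ^+ 2 by rewrite ltr_wpDr // mulr_ge0 ?exprn_even_ge0 // ltW.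
have : 1 + g * x k ^+ 2 < expR (Rate * ln 2).
  by rewrite -(lnK p0) ltr_expR.
rewrite ler_pdivlMr // /aa => h; lra.
Qed.

Lemma cond_lower g (x : 'I_M -> R) : 0 < g ->
  (forall k, x k ^+ 2 <= ee / g) -> \sum_(l < M) log2 (1 + g * x l ^+ 2) < Rate.
Proof.
move=> g0 hx.
apply: (@le_lt_trans _ _ (\sum_(l < M) (ee / ln 2))).
  apply: ler_sum => l _; rewrite /log2 ler_pM2r ?invr_gt0 //.
  have gx0 : 0 <= g * x l ^+ 2 by rewrite mulr_ge0 ?exprn_even_ge0 // ltW.
  apply: le_trans (le_ln1Dx _) _; first by apply: lt_le_trans gx0; rewrite ltrN10.
  by have := hx l; rewrite ler_pdivlMr // => h; lra.
rewrite sum_cst /ee.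
have M0 : 0 < M%:R :> R by rewrite ltr0n.
have -> : Rate * ln 2 / (2 * M%:R) / ln 2 * M%:R = Rate / 2.
  by field; rewrite !gt_eqF.
have := Rate0; rewrite ltr_pdivrMr ?ltr0n //; lra.
Qed.

Lemma Pout_upper g : 0 < g -> aa / g <= cc ->
  (Pout sigma lambda Rate g <= (PP M sigma lambda * (aa / g) ^+ M)%:E)%E.
Proof.
move=> g0 hc.
have ag0 : 0 <= aa / g by rewrite divr_ge0 // ltW // aa_gt0.
set B := Num.sqrt (aa / g).
have B0 : 0 <= B := sqrtr_ge0 _.
have B2 : B ^+ 2 = aa / g := sqr_sqrtr ag0.
have PP0 : 0 <= PP M sigma lambda by apply: ltW; apply: PP_gt0.
have -> : aa / g = B * (B - 0) by rewrite subr0 -expr2 B2.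
have B0' : (0:R) <= (0:R) <= B by rewrite lexx B0.
rewrite -(iint_prod M B 0 B B0 B0' _ PP0).
apply: iint_pos_le.
- move=> x x0; case: ifP => _ //; exact: jpdf_ge0.
- move=> x x0; case: ifP => [hs|_]; last first.
    rewrite lee_fin mulr_ge0 // prodr_ge0 // => k _.
    by rewrite mulr_ge0 // indic_ge0.
  have hx := cond_upper _ _ g0 hs.
  apply: le_trans (@jpdf_upper M sigma lambda sig0 lam1 x x0 _) _.
    by move=> k; apply: qq_le1; exact: le_trans (hx k) hc.
  rewrite lee_fin ler_wpM2l //; apply: ler_prod => k _; rewrite x0 /=.
  have xB : x k <= B by have := hx k; rewrite -B2 => h; have := x0 k; nra.
  by rewrite indicE mem_set ?mulr1 // /= in_itv /= x0 xB.
Qed.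

Definition KK := PP M sigma lambda * (expR (- (1 + SS M lambda)) * expR (-1) ^+ M).

Lemma KK_gt0 : 0 < KK.
Proof. by rewrite /KK mulr_gt0 ?PP_gt0 // mulr_gt0 ?exprn_gt0 ?expR_gt0. Qed.

Lemma Pout_lower g : 0 < g -> ee / g <= cc ->
  ((KK * (ee / g / 4) ^+ M)%:E <= Pout sigma lambda Rate g)%E.
Proof.
move=> g0 hc.
have eg0 : 0 <= ee / g by rewrite divr_ge0 // ltW // ee_gt0.
set b := Num.sqrt (ee / g).
have b0 : 0 <= b := sqrtr_ge0 _.
have b2 : b ^+ 2 = ee / g := sqr_sqrtr eg0.
have K0 : 0 <= KK by apply: ltW; apply: KK_gt0.
have -> : ee / g / 4 = b / 2 * (b - b / 2) by rewrite -b2; field.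
have bb0 : 0 <= b / 2 by rewrite divr_ge0.
have bb : 0 <= b / 2 <= b by rewrite bb0 /=; lra.
rewrite -(iint_prod M (b / 2) (b / 2) b bb0 bb _ K0).
apply: iint_pos_le.
- move=> x x0; rewrite lee_fin mulr_ge0 // prodr_ge0 // => k _.
  by rewrite mulr_ge0 // indic_ge0.
- move=> x x0.
  case: (boolP [forall k, x k \in (`[b / 2, b]%classic : set R)]) => [/forallP hall | /forallPn [k hk]]; last first.
    rewrite (bigD1 k) //= indicE (negbTE hk) mulr0 mul0r mulr0.
    by case: ifP => _ //; exact: jpdf_ge0.
  have hx2 : forall k, x k ^+ 2 <= ee / g.
    move=> k; have := set_mem (hall k); rewrite /= in_itv /= => /andP[_ h]; have := x0 k; rewrite -b2; nra.
  rewrite (cond_lower _ _ g0 hx2).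
  apply: le_trans (@jpdf_lower M sigma lambda sig0 lam1 x x0 (fun k => qq_le1 _ _ (le_trans (hx2 k) hc))).
  rewrite lee_fin /KK -[X in X <= _]mulrA ler_wpM2l //; first by apply: ltW; apply: PP_gt0.
  rewrite ler_wpM2l //.
  apply: ler_prod => k _; rewrite indicE (hall k) mulr1 bb0 /=.
  by have := set_mem (hall k); rewrite /= in_itv /= => /andP[h _].
Qed.
End Pb.

Lemma ln_scale (C u g : R) n : 0 < C -> 0 < u -> 0 < g ->
  ln (C * (u / g) ^+ n) = ln (C * u ^+ n) - n%:R * ln g.
Proof.
move=> C0 u0 g0.
rewrite expr_div_n mulrA ln_div ?posrE ?mulr_gt0 ?exprn_gt0 //.
by rewrite lnXn // mulr_natl.
Qed.

Lemma gt_cond (a c g : R) : 0 < c -> 0 < g -> a / c <= g -> a / g <= c.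
Proof.
move=> c0 g0; rewrite !ler_pdivrMr // => h; by rewrite mulrC.
Qed.
End S.

Theorem mainTheorem12 (R : realType) (M : nat) (sigma lambda : 'I_M -> R)
  (Rate : R) :
  (1 <= M)%N ->
  (forall k, 0 < sigma k) ->
  (forall k, `|lambda k| < 1) ->
  0 < Rate ->
  (fun gammaT : R => ln (fine (Pout sigma lambda Rate gammaT)) / ln gammaT)
    @ +oo --> - (M%:R : R).
Proof.
move=> M1 sig0 lam1 Rate0.
have cc0 := @cc_gt0 _ _ _ _ sig0 lam1.
have aa0 := @aa_gt0 _ _ Rate0.
have ee0 := @ee_gt0 _ _ _ M1 Rate0.
have KK0 := @KK_gt0 _ _ _ _ sig0 lam1.
have PP0 := @PP_gt0 _ _ _ _ sig0 lam1.
apply: (@ln_div_lim R _ (ln (KK R M sigma lambda * (ee R M Rate / 4) ^+ M))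
                   (ln (PP R M sigma lambda * aa R Rate ^+ M))).
near=> g.
have g0 : 0 < g by near: g; exact: nbhs_pinfty_gt (num_real _).
have hc1 : aa R Rate / g <= cc R M sigma lambda.
  apply: gt_cond => //; near: g; exact: nbhs_pinfty_ge (num_real _).
have hc2 : ee R M Rate / g <= cc R M sigma lambda.
  apply: gt_cond => //; near: g; exact: nbhs_pinfty_ge (num_real _).
have up := @Pout_upper _ _ _ _ _ sig0 lam1 Rate0 _ g0 hc1.
have lo := @Pout_lower _ _ _ _ _ M1 sig0 lam1 Rate0 _ g0 hc2.
move: up lo; case: (Pout sigma lambda Rate g) => [p| |] up lo //=.
rewrite lee_fin in up; rewrite lee_fin in lo.
have lp : 0 < KK R M sigma lambda * (ee R M Rate / g / 4) ^+ M.
  by rewrite mulr_gt0 // exprn_gt0 // divr_gt0 // divr_gt0.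
have p0 : 0 < p by exact: lt_le_trans lp lo.
have lnle : forall x y : R, 0 < x -> x <= y -> ln x <= ln y.
  by move=> x y x0 xy; rewrite ler_ln ?posrE // (lt_le_trans x0 xy).
apply/andP; split.
- rewrite -ln_scale //; last by rewrite divr_gt0.
  apply: lnle; last by rewrite [ee R M Rate / 4 / g]mulrAC.
  by rewrite mulr_gt0 // exprn_gt0 // divr_gt0 // divr_gt0.
- rewrite -(@ln_scale R (PP R M sigma lambda) (aa R Rate) g M) //; apply: lnle => //.
Unshelve. all: by end_near.
Qed.
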